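(* Let $\Omega\subset\mathbb{R}^3$ be a domain, $q\in C(\Omega,\mathbb{C})$, and let $\varphi$ be a non-vanishing solution of $(-\Delta+q)\varphi=0$ in $\Omega$. Let $\mathbf w\in C^1(\Omega,\mathrm{Vec}\,\mathbb{H}(\mathbb{C}))$ be a purely vectorial solution of $$D\mathbf w+\mathbf w\,\frac{D\varphi}{\varphi}=0 \quad\text{in }\Omega.$$ Then $W_0=\tfrac12\varphi\,\mathcal A\!\left[\frac{\mathbf w}{\varphi}\right]$ is a solution of $(-\Delta+q)W_0=0$ in $\Omega$, and, wherever $\mathcal A\!\left[\frac{\mathbf w}{\varphi}\right]$ does not vanish, $$\mathbf Q=-\varphi^{-1}\left(\mathrm{grad}\,\varphi+\frac{\mathbf w}{\mathcal A\left[\frac{\mathbf w}{\varphi}\right]}\right)$$ is a solution of the Riccati equation $D\mathbf Q+|\mathbf Q|^2=q$.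
   Context: $\mathbb{H}(\mathbb{C})$ denotes the complex quaternions: elements $x=\sum_{\ell=0}^3x_\ell e_\ell$ with $x_\ell\in\mathbb{C}$, $e_0=1$, $e_pe_q=-\delta_{pq}+\varepsilon_{pqr}e_r$ for $p,q,r\in\{1,2,3\}$, and $i$ commuting with all $e_\ell$; $\mathrm{Vec}\,x=\sum_{j=1}^3x_je_j$. For a vector $\mathbf Q$, $|\mathbf Q|^2=-\mathbf Q^2=\sum_jQ_j^2$. The Dirac operator is $D\varphi=\sum_{k=1}^3e_k\partial_k\varphi$ (for scalar $\varphi$, $D\varphi=\mathrm{grad}\,\varphi$). For a curl-free vector function $\boldsymbol\psi=\sum\psi_ke_k$, $\mathcal A[\boldsymbol\psi](x,y,z)=\int_{x_0}^x\psi_1(\xi,y_0,z_0)d\xi+\int_{y_0}^y\psi_2(x,\eta,z_0)d\eta+\int_{z_0}^z\psi_3(x,y,\zeta)d\zeta+C$, a scalar potential of $\boldsymbol\psi$ ($(x_0,y_0,z_0)\in\Omega$ fixed, $C$ an arbitrary complex constant); the hypothesis on $\mathbf w$ implies $\mathrm{rot}(\mathbf w/\varphi)=0$, and $\Omega$ is assumed such that $\mathcal A[\mathbf w/\varphi]$ is well defined. *)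

(* Defs.v *)
From Stdlib Require Import Reals.
Open Scope R_scope.

Record Cx := mkC { Re : R; Im : R }.
Definition C0 : Cx := mkC 0 0.
Definition C1 : Cx := mkC 1 0.
Definition Cadd (a b : Cx) : Cx := mkC (Re a + Re b) (Im a + Im b).
Definition Copp (a : Cx) : Cx := mkC (- Re a) (- Im a).
Definition Cmul (a b : Cx) : Cx :=
  mkC (Re a * Re b - Im a * Im b) (Re a * Im b + Im a * Re b).
Definition Cinv (a : Cx) : Cx :=
  let d := Re a * Re a + Im a * Im a in mkC (Re a / d) (- Im a / d).
Definition CofR (r : R) : Cx := mkC r 0.

(* x = h0 e0 + h1 e1 + h2 e2 + h3 e3, e_p e_q = -delta_pq + eps_pqr e_r *)
Record HC := mkH { h0 : Cx; h1 : Cx; h2 : Cx; h3 : Cx }.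
Definition H0 : HC := mkH C0 C0 C0 C0.
Definition Hadd (a b : HC) : HC :=
  mkH (Cadd (h0 a) (h0 b)) (Cadd (h1 a) (h1 b)) (Cadd (h2 a) (h2 b)) (Cadd (h3 a) (h3 b)).
Definition Hmul (a b : HC) : HC :=
  mkH (Cadd (Cadd (Cmul (h0 a) (h0 b)) (Copp (Cmul (h1 a) (h1 b))))
            (Cadd (Copp (Cmul (h2 a) (h2 b))) (Copp (Cmul (h3 a) (h3 b)))))
      (Cadd (Cadd (Cmul (h0 a) (h1 b)) (Cmul (h1 a) (h0 b)))
            (Cadd (Cmul (h2 a) (h3 b)) (Copp (Cmul (h3 a) (h2 b)))))
      (Cadd (Cadd (Cmul (h0 a) (h2 b)) (Cmul (h2 a) (h0 b)))
            (Cadd (Cmul (h3 a) (h1 b)) (Copp (Cmul (h1 a) (h3 b)))))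
      (Cadd (Cadd (Cmul (h0 a) (h3 b)) (Cmul (h3 a) (h0 b)))
            (Cadd (Cmul (h1 a) (h2 b)) (Copp (Cmul (h2 a) (h1 b))))).
Definition Hscalar (c : Cx) : HC := mkH c C0 C0 C0.
Definition Hvec (a b c : Cx) : HC := mkH C0 a b c.
Definition e1 : HC := Hvec C1 C0 C0.
Definition e2 : HC := Hvec C0 C1 C0.
Definition e3 : HC := Hvec C0 C0 C1.

Definition R3 : Type := (R * R * R)%type.
Inductive dir := d1 | d2 | d3.

Definition shift (p : R3) (k : dir) (t : R) : R3 :=
  match p with (x, y, z) =>
    match k with
    | d1 => (x + t, y, z)
    | d2 => (x, y + t, z)
    | d3 => (x, y, z + t)
    end
  end.

Definition dist3 (p p' : R3) : R :=
  match p, p' with (x, y, z), (x', y', z') =>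
    Rmax (Rabs (x - x')) (Rmax (Rabs (y - y')) (Rabs (z - z'))) end.

Definition has_pdR (f : R3 -> R) (p : R3) (k : dir) (l : R) : Prop :=
  derivable_pt_lim (fun t => f (shift p k t)) 0 l.
Definition has_pdC (f : R3 -> Cx) (p : R3) (k : dir) (l : Cx) : Prop :=
  has_pdR (fun q => Re (f q)) p k (Re l) /\ has_pdR (fun q => Im (f q)) p k (Im l).
Definition has_pdH (f : R3 -> HC) (p : R3) (k : dir) (l : HC) : Prop :=
  has_pdC (fun q => h0 (f q)) p k (h0 l) /\ has_pdC (fun q => h1 (f q)) p k (h1 l) /\
  has_pdC (fun q => h2 (f q)) p k (h2 l) /\ has_pdC (fun q => h3 (f q)) p k (h3 l).

(* Dirac operator applied to the partial derivatives: sum_k e_k d_k *)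
Definition Dsum (d : dir -> HC) : HC :=
  Hadd (Hadd (Hmul e1 (d d1)) (Hmul e2 (d d2))) (Hmul e3 (d d3)).
Definition gradH (d : dir -> Cx) : HC := Hvec (d d1) (d d2) (d d3).

Definition openS (Om : R3 -> Prop) : Prop :=
  forall p, Om p -> exists eps, 0 < eps /\ forall p', dist3 p p' < eps -> Om p'.
Definition rel_open (Om U : R3 -> Prop) : Prop :=
  forall p, U p -> exists eps, 0 < eps /\ forall p', Om p' -> dist3 p p' < eps -> U p'.
Definition connectedS (Om : R3 -> Prop) : Prop :=
  forall U V : R3 -> Prop,
    (forall p, Om p <-> (U p \/ V p)) -> (forall p, ~ (U p /\ V p)) ->
    rel_open Om U -> rel_open Om V ->
    (forall p, ~ U p) \/ (forall p, ~ V p).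
Definition is_domain (Om : R3 -> Prop) : Prop := openS Om /\ connectedS Om.

Definition contC (Om : R3 -> Prop) (f : R3 -> Cx) : Prop :=
  forall p, Om p -> forall eps, 0 < eps -> exists del, 0 < del /\
    forall p', Om p' -> dist3 p p' < del ->
      Rabs (Re (f p') - Re (f p)) < eps /\ Rabs (Im (f p') - Im (f p)) < eps.
Definition C1C (Om : R3 -> Prop) (f : R3 -> Cx) : Prop :=
  contC Om f /\ exists df : dir -> R3 -> Cx,
    (forall k p, Om p -> has_pdC f p k (df k p)) /\ (forall k, contC Om (df k)).
Definition C2C (Om : R3 -> Prop) (f : R3 -> Cx) : Prop :=
  contC Om f /\ exists df : dir -> R3 -> Cx,
    (forall k p, Om p -> has_pdC f p k (df k p)) /\ (forall k, C1C Om (df k)).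
Definition C1H (Om : R3 -> Prop) (f : R3 -> HC) : Prop :=
  C1C Om (fun p => h0 (f p)) /\ C1C Om (fun p => h1 (f p)) /\
  C1C Om (fun p => h2 (f p)) /\ C1C Om (fun p => h3 (f p)).

Definition schr_solution (Om : R3 -> Prop) (q f : R3 -> Cx) : Prop :=
  C2C Om f /\
  forall p, Om p -> exists (df : dir -> R3 -> Cx) (dd : dir -> Cx),
    (forall k p', Om p' -> has_pdC f p' k (df k p')) /\
    (forall k, has_pdC (df k) p k (dd k)) /\
    Cadd (Copp (Cadd (Cadd (dd d1) (dd d2)) (dd d3))) (Cmul (q p) (f p)) = C0.

Definition is_RInt_C (g : R -> Cx) (a b : R) (v : Cx) : Prop :=
  (exists pr : Riemann_integrable (fun t => Re (g t)) a b, RiemannInt pr = Re v) /\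
  (exists pr : Riemann_integrable (fun t => Im (g t)) a b, RiemannInt pr = Im v).

(* Phi = A[psi] on Om, with base point (x0,y0,z0) and constant c, where
   psi = psi1 e1 + psi2 e2 + psi3 e3 *)
Definition is_A (Om : R3 -> Prop) (psi1 psi2 psi3 : R3 -> Cx)
    (x0 y0 z0 : R) (c : Cx) (Phi : R3 -> Cx) : Prop :=
  forall x y z, Om (x, y, z) -> exists v1 v2 v3 : Cx,
    is_RInt_C (fun xi => psi1 (xi, y0, z0)) x0 x v1 /\
    is_RInt_C (fun eta => psi2 (x, eta, z0)) y0 y v2 /\
    is_RInt_C (fun zeta => psi3 (x, y, zeta)) z0 z v3 /\
    Phi (x, y, z) = Cadd (Cadd (Cadd v1 v2) v3) c.

Definition A_segments_in (Om : R3 -> Prop) (x0 y0 z0 : R) : Prop :=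
  forall x y z, Om (x, y, z) ->
    (forall s, Rmin x0 x <= s <= Rmax x0 x -> Om (s, y0, z0)) /\
    (forall s, Rmin y0 y <= s <= Rmax y0 y -> Om (x, s, z0)) /\
    (forall s, Rmin z0 z <= s <= Rmax z0 z -> Om (x, y, s)).

(* Main.v *)
From Pilot Require Import Defs.
From Stdlib Require Import Reals Lra Psatz Field.
From Coquelicot Require Import Coquelicot.
Import Pilot.Defs.
Open Scope R_scope.


Lemma Cx_eq : forall a b : Cx, Re a = Re b -> Im a = Im b -> a = b.
Proof. intros [a1 a2] [b1 b2]; simpl; intros; subst; reflexivity. Qed.

Definition Csub (a b : Cx) := Cadd a (Copp b).
Definition Cdiv (a b : Cx) := Cmul a (Cinv b).

Lemma Cring : ring_theory C0 C1 Cadd Cmul Csub Copp (@eq Cx).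
Proof.
  constructor; intros; apply Cx_eq; unfold Csub; simpl; ring.
Qed.

Lemma C1_neq_C0 : C1 <> C0.
Proof. intro H; injection H; intros; lra. Qed.

Lemma Cnz_norm : forall a : Cx, a <> C0 -> Re a * Re a + Im a * Im a <> 0.
Proof.
  intros [x y] H; simpl; intro E; apply H.
  assert (x = 0) by nra; assert (y = 0) by nra; subst; reflexivity.
Qed.

Lemma Cfield : field_theory C0 C1 Cadd Cmul Csub Copp Cdiv Cinv (@eq Cx).
Proof.
  constructor.
  - exact Cring.
  - exact C1_neq_C0.
  - reflexivity.
  - intros p Hp. pose proof (Cnz_norm p Hp) as N.
    apply Cx_eq; simpl; field; exact N.
Qed.

Add Field CxF : Cfield.

Lemma C0_combo : forall a b : Cx, a = b -> Csub a b = C0.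
Proof. intros; subst; ring. Qed.

Lemma shift0 : forall p k, shift p k 0 = p.
Proof. intros [[x y] z] []; simpl; rewrite Rplus_0_r; reflexivity. Qed.

Lemma shift_add : forall p k s t, shift (shift p k s) k t = shift p k (s + t).
Proof. intros [[x y] z] [] s t; simpl; rewrite Rplus_assoc; reflexivity. Qed.

Lemma dist3_shift : forall p k t, dist3 p (shift p k t) = Rabs t.
Proof.
  intros [[x y] z] [] t; simpl.
  - replace (x - (x + t)) with (- t) by ring; replace (y - y) with 0 by ring;
    replace (z - z) with 0 by ring.
    rewrite Rabs_R0, Rabs_Ropp; unfold Rmax; repeat destruct Rle_dec; pose proof (Rabs_pos t); lra.
  - replace (y - (y + t)) with (- t) by ring; replace (x - x) with 0 by ring;
    replace (z - z) with 0 by ring.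
    rewrite Rabs_R0, Rabs_Ropp; unfold Rmax; repeat destruct Rle_dec; pose proof (Rabs_pos t); lra.
  - replace (z - (z + t)) with (- t) by ring; replace (y - y) with 0 by ring;
    replace (x - x) with 0 by ring.
    rewrite Rabs_R0, Rabs_Ropp; unfold Rmax; repeat destruct Rle_dec; pose proof (Rabs_pos t); lra.
Qed.

Lemma dist3_sym : forall p q, dist3 p q = dist3 q p.
Proof.
  intros [[x y] z] [[a b] c]; simpl.
  rewrite (Rabs_minus_sym x a), (Rabs_minus_sym y b), (Rabs_minus_sym z c); reflexivity.
Qed.

Lemma dist3_tri : forall p q r, dist3 p r <= dist3 p q + dist3 q r.
Proof.
  intros [[x y] z] [[a b] c] [[u v] w]; simpl.
  pose proof (Rabs_triang (x - a) (a - u)).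
  pose proof (Rabs_triang (y - b) (b - v)).
  pose proof (Rabs_triang (z - c) (c - w)).
  replace (x - a + (a - u)) with (x - u) in * by ring.
  replace (y - b + (b - v)) with (y - v) in * by ring.
  replace (z - c + (c - w)) with (z - w) in * by ring.
  unfold Rmax; repeat destruct Rle_dec; lra.
Qed.

Lemma dist3_le : forall x y z a b c, dist3 (x,y,z) (a,b,c) < 
    Rmax (Rabs (x - a)) (Rmax (Rabs (y - b)) (Rabs (z - c))) + 1.
Proof. intros; simpl; lra. Qed.

Lemma dist3_lt : forall x y z a b c e, Rabs (x - a) < e -> Rabs (y - b) < e -> Rabs (z - c) < e ->
   dist3 (x,y,z) (a,b,c) < e.
Proof. intros; simpl; unfold Rmax; repeat destruct Rle_dec; lra. Qed.

Lemma dist3_comp : forall x y z a b c e, dist3 (x,y,z) (a,b,c) < e ->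
  Rabs (x - a) < e /\ Rabs (y - b) < e /\ Rabs (z - c) < e.
Proof. intros x y z a b c e; simpl; unfold Rmax; repeat destruct Rle_dec; lra. Qed.

Lemma open_ball : forall Om p, openS Om -> Om p ->
  exists eps, 0 < eps /\ forall q, dist3 p q < eps -> Om q.
Proof. intros Om p H Hp; exact (H p Hp). Qed.

Lemma open_shift : forall Om p k, openS Om -> Om p ->
  exists eps, 0 < eps /\ forall t, Rabs t < eps -> Om (shift p k t).
Proof.
  intros Om p k H Hp; destruct (H p Hp) as [e [He H']]; exists e; split; auto.
  intros t Ht; apply H'; rewrite dist3_shift; auto.
Qed.


Lemma ball_R : forall (x : R) (e : posreal) y, ball x e y <-> Rabs (y - x) < e.
Proof.
  intros x e y; unfold ball; simpl; unfold AbsRing_ball, abs, minus, plus, opp; simpl.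
  unfold Rminus; tauto.
Qed.

Lemma locally_R : forall (x : R) (P : R -> Prop),
  (exists e, 0 < e /\ forall y, Rabs (y - x) < e -> P y) -> locally x P.
Proof.
  intros x P [e [He H]]; exists (mkposreal e He); intros y Hy; apply H; apply ball_R in Hy; exact Hy.
Qed.

Lemma locally_R_inv : forall (x : R) (P : R -> Prop),
  locally x P -> exists e, 0 < e /\ forall y, Rabs (y - x) < e -> P y.
Proof.
  intros x P [e H]; exists e; split; [apply cond_pos|]; intros y Hy; apply H; apply ball_R; exact Hy.
Qed.

Lemma dpl_trans : forall (h : R -> R) a l,
  derivable_pt_lim (fun t => h (a + t)) 0 l <-> derivable_pt_lim h a l.
Proof.
  intros h a l; unfold derivable_pt_lim; split; intros H eps He;
  destruct (H eps He) as [d Hd]; exists d; intros t Ht1 Ht2; specialize (Hd t Ht1 Ht2).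
  - rewrite Rplus_0_l, Rplus_0_r in Hd; exact Hd.
  - rewrite Rplus_0_l, Rplus_0_r; exact Hd.
Qed.

Lemma pd1 : forall f x y z l, has_pdR f (x,y,z) d1 l <-> is_derive (fun u => f (u,y,z)) x l.
Proof. intros; unfold has_pdR; simpl; rewrite is_derive_Reals; apply (dpl_trans (fun u => f (u,y,z))). Qed.
Lemma pd2 : forall f x y z l, has_pdR f (x,y,z) d2 l <-> is_derive (fun u => f (x,u,z)) y l.
Proof. intros; unfold has_pdR; simpl; rewrite is_derive_Reals; apply (dpl_trans (fun u => f (x,u,z))). Qed.
Lemma pd3 : forall f x y z l, has_pdR f (x,y,z) d3 l <-> is_derive (fun u => f (x,y,u)) z l.
Proof. intros; unfold has_pdR; simpl; rewrite is_derive_Reals; apply (dpl_trans (fun u => f (x,y,u))). Qed.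

Lemma pdR_eq : forall f p k l l', has_pdR f p k l -> l = l' -> has_pdR f p k l'.
Proof. intros; subst; auto. Qed.

Lemma pdR_const : forall a p k, has_pdR (fun _ => a) p k 0.
Proof. intros; unfold has_pdR; apply (derivable_pt_lim_const a 0). Qed.

Lemma pdR_plus : forall f g p k l m, has_pdR f p k l -> has_pdR g p k m ->
  has_pdR (fun q => f q + g q) p k (l + m).
Proof. intros f g p k l m H1 H2; unfold has_pdR in *;
  exact (derivable_pt_lim_plus _ _ _ _ _ H1 H2). Qed.

Lemma pdR_minus : forall f g p k l m, has_pdR f p k l -> has_pdR g p k m ->
  has_pdR (fun q => f q - g q) p k (l - m).
Proof. intros f g p k l m H1 H2; unfold has_pdR in *;
  exact (derivable_pt_lim_minus _ _ _ _ _ H1 H2). Qed.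

Lemma pdR_opp : forall f p k l, has_pdR f p k l -> has_pdR (fun q => - f q) p k (- l).
Proof. intros f p k l H1; unfold has_pdR in *;
  exact (derivable_pt_lim_opp _ _ _ H1). Qed.

Lemma pdR_mult : forall f g p k l m, has_pdR f p k l -> has_pdR g p k m ->
  has_pdR (fun q => f q * g q) p k (l * g p + f p * m).
Proof. intros f g p k l m H1 H2; unfold has_pdR in *;
  pose proof (derivable_pt_lim_mult _ _ _ _ _ H1 H2) as H; cbv beta in H; rewrite ?shift0 in H; exact H. Qed.

Lemma pdR_div : forall f g p k l m, has_pdR f p k l -> has_pdR g p k m -> g p <> 0 ->
  has_pdR (fun q => f q / g q) p k ((l * g p - m * f p) / (g p)²).
Proof. intros f g p k l m H1 H2 H3; unfold has_pdR in *;
  assert (H3' : (fun t => g (shift p k t)) 0 <> 0) by (cbv beta; rewrite shift0; auto);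
  pose proof (derivable_pt_lim_div _ _ _ _ _ H1 H2 H3') as H; cbv beta in H; rewrite ?shift0 in H; exact H. Qed.

Lemma pdR_unique : forall f p k l m, has_pdR f p k l -> has_pdR f p k m -> l = m.
Proof. intros f p k l m H1 H2; exact (uniqueness_limite _ _ _ _ H1 H2). Qed.

Lemma pdR_loc : forall f g p k l,
  (exists e, 0 < e /\ forall t, Rabs t < e -> f (shift p k t) = g (shift p k t)) ->
  has_pdR f p k l -> has_pdR g p k l.
Proof.
  intros f g p k l [e [He H]] Hf; unfold has_pdR in *.
  apply is_derive_Reals in Hf; apply is_derive_Reals.
  apply (is_derive_ext_loc (fun t => f (shift p k t))); auto.
  apply locally_R; exists e; split; auto; intros y Hy; apply H; rewrite Rminus_0_r in Hy; auto.
Qed.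

Lemma pdC_eq : forall f p k l l', has_pdC f p k l -> l = l' -> has_pdC f p k l'.
Proof. intros; subst; auto. Qed.

Lemma pdC_const : forall a p k, has_pdC (fun _ => a) p k C0.
Proof. intros; split; simpl; apply pdR_const. Qed.

Lemma pdC_add : forall f g p k l m, has_pdC f p k l -> has_pdC g p k m ->
  has_pdC (fun q => Cadd (f q) (g q)) p k (Cadd l m).
Proof. intros f g p k l m [A B] [C D]; split; simpl; apply pdR_plus; auto. Qed.

Lemma pdC_opp : forall f p k l, has_pdC f p k l -> has_pdC (fun q => Copp (f q)) p k (Copp l).
Proof. intros f p k l [A B]; split; simpl; apply pdR_opp; auto. Qed.

Lemma pdC_mul : forall f g p k l m, has_pdC f p k l -> has_pdC g p k m ->
  has_pdC (fun q => Cmul (f q) (g q)) p k (Cadd (Cmul l (g p)) (Cmul (f p) m)).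
Proof.
  intros f g p k l m [A B] [C D]; split; simpl.
  - eapply pdR_eq; [apply pdR_minus; apply pdR_mult; eauto|]; simpl; ring.
  - eapply pdR_eq; [apply pdR_plus; apply pdR_mult; eauto|]; simpl; ring.
Qed.

Lemma pdC_inv : forall f p k l, has_pdC f p k l -> f p <> C0 ->
  has_pdC (fun q => Cinv (f q)) p k (Copp (Cmul l (Cmul (Cinv (f p)) (Cinv (f p))))).
Proof.
  intros f p k l [A B] Hn; pose proof (Cnz_norm _ Hn) as N.
  assert (D : has_pdR (fun q => Re (f q) * Re (f q) + Im (f q) * Im (f q)) p k
     (Re l * Re (f p) + Re (f p) * Re l + (Im l * Im (f p) + Im (f p) * Im l))).
  { apply pdR_plus; apply pdR_mult; auto. }
  split; simpl.
  - eapply pdR_eq; [apply pdR_div; eauto|]. unfold Rsqr; simpl; field; auto.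
  - eapply pdR_eq; [apply pdR_div; [apply pdR_opp; eauto|eauto|auto]|]. unfold Rsqr; simpl; field; auto.
Qed.

Lemma pdC_unique : forall f p k l m, has_pdC f p k l -> has_pdC f p k m -> l = m.
Proof.
  intros f p k l m [A B] [C D]; apply Cx_eq; eapply pdR_unique; eauto.
Qed.

Lemma pdC_loc : forall f g p k l,
  (exists e, 0 < e /\ forall t, Rabs t < e -> f (shift p k t) = g (shift p k t)) ->
  has_pdC f p k l -> has_pdC g p k l.
Proof.
  intros f g p k l [e [He H]] [A B]; split.
  - apply (pdR_loc (fun q => Re (f q))); auto; exists e; split; auto; intros; rewrite H; auto.
  - apply (pdR_loc (fun q => Im (f q))); auto; exists e; split; auto; intros; rewrite H; auto.
Qed.

Lemma pdC_loc_Om : forall (Om : R3 -> Prop) f g p k l, openS Om -> Om p ->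
  (forall q, Om q -> f q = g q) -> has_pdC f p k l -> has_pdC g p k l.
Proof.
  intros Om f g p k l HO Hp H Hf; apply (pdC_loc f); auto.
  destruct (open_shift Om p k HO Hp) as [e [He He']]; exists e; split; auto.
Qed.

Lemma pdR_loc_Om : forall (Om : R3 -> Prop) f g p k l, openS Om -> Om p ->
  (forall q, Om q -> f q = g q) -> has_pdR f p k l -> has_pdR g p k l.
Proof.
  intros Om f g p k l HO Hp H Hf; apply (pdR_loc f); auto.
  destruct (open_shift Om p k HO Hp) as [e [He He']]; exists e; split; auto.
Qed.

Lemma pdC_unique_Om : forall (Om : R3 -> Prop) f g p k l m, openS Om -> Om p ->
  (forall q, Om q -> f q = g q) -> has_pdC f p k l -> has_pdC g p k m -> l = m.
Proof.
  intros; eapply pdC_unique; [|eauto]; eapply pdC_loc_Om; eauto.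
Qed.


Definition cR (Om : R3 -> Prop) (g : R3 -> R) (p : R3) : Prop :=
  forall eps, 0 < eps -> exists del, 0 < del /\
    forall q, Om q -> dist3 p q < del -> Rabs (g q - g p) < eps.
Definition cC (Om : R3 -> Prop) (f : R3 -> Cx) (p : R3) : Prop :=
  cR Om (fun q => Re (f q)) p /\ cR Om (fun q => Im (f q)) p.

Lemma contC_cC : forall Om f p, contC Om f -> Om p -> cC Om f p.
Proof.
  intros Om f p H Hp; split; intros eps He; destruct (H p Hp eps He) as [d [Hd H']];
  exists d; split; auto; intros q Hq Hpq; apply H'; auto.
Qed.

Lemma cC_contC : forall Om f, (forall p, Om p -> cC Om f p) -> contC Om f.
Proof.
  intros Om f H p Hp eps He; destruct (H p Hp) as [A B].
  destruct (A eps He) as [d1 [Hd1 H1]]; destruct (B eps He) as [d2 [Hd2 H2]].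
  exists (Rmin d1 d2); split; [apply Rmin_pos; auto|].
  intros q Hq Hpq; split; [apply H1|apply H2]; auto;
  eapply Rlt_le_trans; eauto; [apply Rmin_l|apply Rmin_r].
Qed.

Lemma cR_2d : forall Om g1 g2 (h : R -> R -> R) p, cR Om g1 p -> cR Om g2 p ->
  continuity_2d_pt h (g1 p) (g2 p) -> cR Om (fun q => h (g1 q) (g2 q)) p.
Proof.
  intros Om g1 g2 h p H1 H2 H eps He.
  destruct (H (mkposreal eps He)) as [d Hd].
  destruct (H1 d (cond_pos d)) as [d1 [Hd1 K1]]; destruct (H2 d (cond_pos d)) as [d2 [Hd2 K2]].
  exists (Rmin d1 d2); split; [apply Rmin_pos; auto|].
  intros q Hq Hpq; apply (Hd (g1 q) (g2 q)); [apply K1|apply K2]; auto;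
  eapply Rlt_le_trans; eauto; [apply Rmin_l|apply Rmin_r].
Qed.

Lemma cR_const : forall Om a p, cR Om (fun _ => a) p.
Proof. intros Om a p eps He; exists 1; split; [lra|]; intros; rewrite Rminus_eq_0, Rabs_R0; auto. Qed.

Lemma cR_plus : forall Om f g p, cR Om f p -> cR Om g p -> cR Om (fun q => f q + g q) p.
Proof. intros; apply (cR_2d Om f g (fun u v => u + v)); auto;
  apply continuity_2d_pt_plus; [apply continuity_2d_pt_id1|apply continuity_2d_pt_id2]. Qed.
Lemma cR_minus : forall Om f g p, cR Om f p -> cR Om g p -> cR Om (fun q => f q - g q) p.
Proof. intros; apply (cR_2d Om f g (fun u v => u - v)); auto;
  apply continuity_2d_pt_minus; [apply continuity_2d_pt_id1|apply continuity_2d_pt_id2]. Qed.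
Lemma cR_mult : forall Om f g p, cR Om f p -> cR Om g p -> cR Om (fun q => f q * g q) p.
Proof. intros; apply (cR_2d Om f g (fun u v => u * v)); auto;
  apply continuity_2d_pt_mult; [apply continuity_2d_pt_id1|apply continuity_2d_pt_id2]. Qed.
Lemma cR_opp : forall Om f p, cR Om f p -> cR Om (fun q => - f q) p.
Proof. intros; apply (cR_2d Om f f (fun u v => - u)); auto;
  apply continuity_2d_pt_opp; apply continuity_2d_pt_id1. Qed.
Lemma cR_inv : forall Om f p, cR Om f p -> f p <> 0 -> cR Om (fun q => / f q) p.
Proof. intros; apply (cR_2d Om f f (fun u v => / u)); auto;
  apply continuity_2d_pt_inv; auto; apply continuity_2d_pt_id1. Qed.
Lemma cR_div : forall Om f g p, cR Om f p -> cR Om g p -> g p <> 0 -> cR Om (fun q => f q / g q) p.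
Proof. intros; unfold Rdiv; apply cR_mult; auto; apply cR_inv; auto. Qed.

Lemma cR_ext : forall Om f g p, Om p -> (forall q, Om q -> f q = g q) -> cR Om f p -> cR Om g p.
Proof.
  intros Om f g p Hp E H eps He; destruct (H eps He) as [d [Hd H']]; exists d; split; auto.
  intros q Hq Hpq; rewrite <- !E; auto.
Qed.

Lemma cC_const : forall Om a p, cC Om (fun _ => a) p.
Proof. intros; split; apply cR_const. Qed.
Lemma cC_add : forall Om f g p, cC Om f p -> cC Om g p -> cC Om (fun q => Cadd (f q) (g q)) p.
Proof. intros Om f g p [A B] [C D]; split; simpl; apply cR_plus; auto. Qed.
Lemma cC_opp : forall Om f p, cC Om f p -> cC Om (fun q => Copp (f q)) p.
Proof. intros Om f p [A B]; split; simpl; apply cR_opp; auto. Qed.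
Lemma cC_mul : forall Om f g p, cC Om f p -> cC Om g p -> cC Om (fun q => Cmul (f q) (g q)) p.
Proof. intros Om f g p [A B] [C D]; split; simpl;
  [apply cR_minus|apply cR_plus]; apply cR_mult; auto. Qed.
Lemma cC_inv : forall Om f p, cC Om f p -> f p <> C0 -> cC Om (fun q => Cinv (f q)) p.
Proof.
  intros Om f p [A B] Hn; pose proof (Cnz_norm _ Hn); split; simpl;
  apply cR_div; auto; try (apply cR_opp; auto);
  apply cR_plus; apply cR_mult; auto.
Qed.
Lemma cC_ext : forall Om f g p, Om p -> (forall q, Om q -> f q = g q) -> cC Om f p -> cC Om g p.
Proof.
  intros Om f g p Hp E [A B]; split; [apply (cR_ext Om (fun q => Re (f q)))|apply (cR_ext Om (fun q => Im (f q)))]; auto; intros q Hq; rewrite E; auto.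
Qed.


Definition Lip (L : R -> R -> R3) : Prop :=
  forall u v u' v', dist3 (L u v) (L u' v') <= Rmax (Rabs (u - u')) (Rabs (v - v')).

Lemma cont2d_1 : forall f x t, continuity_2d_pt f x t -> continuous (fun u => f u t) x.
Proof.
  intros f x t H; apply continuity_pt_filterlim.
  unfold continuity_pt, continue_in, limit1_in, limit_in; simpl; unfold R_dist.
  intros eps He; destruct (H (mkposreal eps He)) as [d Hd]; exists d; split; [apply cond_pos|].
  intros u [_ Hu]; apply Hd; auto; rewrite Rminus_eq_0, Rabs_R0; apply cond_pos.
Qed.

Lemma cont2d_2 : forall f x t, continuity_2d_pt f x t -> continuous (fun v => f x v) t.
Proof.
  intros f x t H; apply continuity_pt_filterlim.
  unfold continuity_pt, continue_in, limit1_in, limit_in; simpl; unfold R_dist.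
  intros eps He; destruct (H (mkposreal eps He)) as [d Hd]; exists d; split; [apply cond_pos|].
  intros u [_ Hu]; apply Hd; auto; rewrite Rminus_eq_0, Rabs_R0; apply cond_pos.
Qed.

Lemma c2d_ext : forall f g x t,
  (exists e, 0 < e /\ forall u v, Rabs (u - x) < e -> Rabs (v - t) < e -> f u v = g u v) ->
  continuity_2d_pt g x t -> continuity_2d_pt f x t.
Proof.
  intros f g x t [e [He E]] H eps; destruct (H eps) as [d Hd].
  assert (0 < Rmin d e) by (apply Rmin_pos; [apply cond_pos|auto]).
  exists (mkposreal _ H0); simpl; intros u v Hu Hv.
  assert (Rabs (u - x) < d) by (eapply Rlt_le_trans; [exact Hu|]; apply Rmin_l).
  assert (Rabs (v - t) < d) by (eapply Rlt_le_trans; [exact Hv|]; apply Rmin_l).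
  assert (Rabs (u - x) < e) by (eapply Rlt_le_trans; [exact Hu|]; apply Rmin_r).
  assert (Rabs (v - t) < e) by (eapply Rlt_le_trans; [exact Hv|]; apply Rmin_r).
  rewrite (E u v) by auto; rewrite (E x t) by (rewrite Rminus_eq_0, Rabs_R0; auto).
  apply Hd; auto.
Qed.

Lemma Lip_near : forall Om L x t, openS Om -> Lip L -> Om (L x t) ->
  exists e, 0 < e /\ forall u v, Rabs (u - x) < e -> Rabs (v - t) < e -> Om (L u v).
Proof.
  intros Om L x t HO HL Hp; destruct (HO _ Hp) as [e [He H]]; exists e; split; auto.
  intros u v Hu Hv; apply H; eapply Rle_lt_trans; [apply HL|].
  rewrite (Rabs_minus_sym x u), (Rabs_minus_sym t v); unfold Rmax; destruct Rle_dec; auto.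
Qed.

Lemma plane_cont2d : forall Om L h x t, openS Om -> Lip L -> Om (L x t) ->
  cR Om h (L x t) -> continuity_2d_pt (fun u v => h (L u v)) x t.
Proof.
  intros Om L h x t HO HL Hp Hc eps.
  destruct (Hc eps (cond_pos eps)) as [d [Hd H]].
  destruct (HO _ Hp) as [e0 [He0 H0]].
  assert (0 < Rmin d e0) by (apply Rmin_pos; auto).
  exists (mkposreal _ H1); simpl; intros u v Hu Hv.
  assert (Hdist : dist3 (L x t) (L u v) < Rmin d e0).
  { eapply Rle_lt_trans; [apply HL|].
    rewrite (Rabs_minus_sym x u), (Rabs_minus_sym t v); unfold Rmax; destruct Rle_dec; auto. }
  apply H.
  - apply H0; eapply Rlt_le_trans; eauto; apply Rmin_r.
  - eapply Rlt_le_trans; eauto; apply Rmin_l.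
Qed.

Lemma param_lemma : forall Om (L : R -> R -> R3) (h Dh : R3 -> R) x a b,
  openS Om -> Lip L ->
  (forall q, Om q -> cR Om h q) -> (forall q, Om q -> cR Om Dh q) ->
  (forall u t, Om (L u t) -> is_derive (fun u' => h (L u' t)) u (Dh (L u t))) ->
  (exists e, 0 < e /\ forall u, Rabs (u - x) < e -> forall t, Rmin a b <= t <= Rmax a b -> Om (L u t)) ->
  is_derive (fun u => RInt (fun t => h (L u t)) a b) x (RInt (fun t => Dh (L x t)) a b).
Proof.
  intros Om L h Dh x a b HO HL Hc HDc Hd [e [He HS]].
  assert (Hx : forall t, Rmin a b <= t <= Rmax a b -> Om (L x t)).
  { intros; apply HS; auto; rewrite Rminus_eq_0, Rabs_R0; auto. }
  assert (R1 : RInt (fun t => Derive (fun u => h (L u t)) x) a b = RInt (fun t => Dh (L x t)) a b).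
  { apply RInt_ext; intros t Ht; apply is_derive_unique; apply Hd; apply Hx; lra. }
  rewrite <- R1.
  apply (is_derive_RInt_param (fun u t => h (L u t))).
  - apply locally_R; exists e; split; auto; intros u Hu t Ht.
    exists (Dh (L u t)); apply Hd; apply HS; auto.
  - intros t Ht.
    apply (c2d_ext _ (fun u v => Dh (L u v))).
    + destruct (Lip_near Om L x t HO HL (Hx t Ht)) as [e1 [He1 N]].
      exists e1; split; auto; intros u v Hu Hv.
      apply is_derive_unique; apply Hd; apply N; auto.
    + apply (plane_cont2d Om); auto.
  - apply locally_R; exists e; split; auto; intros u Hu.
    apply (@ex_RInt_continuous R_CompleteNormedModule); intros t Ht.
    apply (cont2d_2 (fun u v => h (L u v))).
    apply (plane_cont2d Om); auto.
Qed.

Lemma ftc_lemma : forall Om (L : R -> R -> R3) (h Dh : R3 -> R) x a b,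
  openS Om -> Lip L -> (forall q, Om q -> cR Om Dh q) ->
  (forall u t, Om (L u t) -> is_derive (fun t' => h (L u t')) t (Dh (L u t))) ->
  (forall t, Rmin a b <= t <= Rmax a b -> Om (L x t)) ->
  RInt (fun t => Dh (L x t)) a b = h (L x b) - h (L x a).
Proof.
  intros Om L h Dh x a b HO HL HDc Hd Hx.
  apply is_RInt_unique.
  apply (is_RInt_derive (fun t => h (L x t)) (fun t => Dh (L x t))).
  - intros t Ht; apply Hd; auto.
  - intros t Ht; apply (cont2d_2 (fun u v => Dh (L u v))); apply (plane_cont2d Om); auto.
Qed.

Lemma upper_lemma : forall Om (L : R -> R -> R3) (h : R3 -> R) x a b,
  openS Om -> Lip L -> (forall q, Om q -> cR Om h q) ->
  (exists e, 0 < e /\ forall u, Rabs (u - b) < e -> forall t, Rmin a u <= t <= Rmax a u -> Om (L x t)) ->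
  is_derive (fun u => RInt (fun t => h (L x t)) a u) b (h (L x b)).
Proof.
  intros Om L h x a b HO HL Hc [e [He HS]].
  apply (@is_derive_RInt R_CompleteNormedModule (fun t => h (L x t)) (fun u => RInt (fun t => h (L x t)) a u) a b).
  - apply locally_R; exists e; split; auto; intros u Hu.
    apply RInt_correct; apply (@ex_RInt_continuous R_CompleteNormedModule); intros t Ht.
    assert (Om (L x t)) by (apply (HS u); auto).
    apply (cont2d_2 (fun u v => h (L u v))); apply (plane_cont2d Om); auto.
  - assert (Om (L x b)).
    { apply (HS b); [rewrite Rminus_eq_0, Rabs_R0; auto|]; unfold Rmin, Rmax; destruct Rle_dec; lra. }
    apply (cont2d_2 (fun u v => h (L u v))); apply (plane_cont2d Om); auto.
Qed.


Ltac lipt := intros u v u' v'; simpl; rewrite ?Rminus_eq_0, ?Rabs_R0;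
  pose proof (Rabs_pos (u - u')); pose proof (Rabs_pos (v - v'));
  unfold Rmax; repeat destruct Rle_dec; lra.

Lemma Lip_a : forall c d, Lip (fun _ t => (t, c, d)).
Proof. intros c d; lipt. Qed.
Lemma Lip_b : forall c, Lip (fun u t => (u, t, c)).
Proof. intros c; lipt. Qed.
Lemma Lip_c : forall c, Lip (fun u t => (u, c, t)).
Proof. intros c; lipt. Qed.
Lemma Lip_d : forall c, Lip (fun u t => (c, u, t)).
Proof. intros c; lipt. Qed.

Lemma is_derive_const0 : forall c x, is_derive (fun _ : R => c) x 0.
Proof. intros; apply is_derive_Reals; apply (derivable_pt_lim_const c x). Qed.

Lemma is_derive_sum3 : forall f1 f2 f3 x l1 l2 l3,
  is_derive f1 x l1 -> is_derive f2 x l2 -> is_derive f3 x l3 ->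
  is_derive (fun u => f1 u + f2 u + f3 u) x (l1 + l2 + l3).
Proof.
  intros f1 f2 f3 x l1 l2 l3 H1 H2 H3; apply is_derive_Reals in H1, H2, H3; apply is_derive_Reals.
  exact (derivable_pt_lim_plus _ _ _ _ _ (derivable_pt_lim_plus _ _ _ _ _ H1 H2) H3).
Qed.

Lemma is_derive_eqv : forall (f : R -> R) x l l', is_derive f x l -> l = l' -> is_derive f x l'.
Proof. intros; subst; auto. Qed.

Definition Fg (x0 y0 z0 : R) (g : dir -> R3 -> R) (p : R3) : R :=
  let '(x, y, z) := p in
  RInt (fun s => g d1 (s, y0, z0)) x0 x + RInt (fun s => g d2 (x, s, z0)) y0 y
  + RInt (fun s => g d3 (x, y, s)) z0 z.

Lemma near3 : forall Om x y z, openS Om -> Om (x,y,z) ->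
  exists e, 0 < e /\ forall a b c, Rabs (a - x) < e -> Rabs (b - y) < e -> Rabs (c - z) < e -> Om (a,b,c).
Proof.
  intros Om x y z HO Hp; destruct (HO _ Hp) as [e [He H]]; exists e; split; auto.
  intros a b c Ha Hb Hc; apply H; apply dist3_lt; rewrite Rabs_minus_sym; auto.
Qed.

Lemma F_deriv : forall Om x0 y0 z0 (g : dir -> R3 -> R) (D : dir -> dir -> R3 -> R),
  openS Om -> A_segments_in Om x0 y0 z0 ->
  (forall k q, Om q -> cR Om (g k) q) ->
  (forall k j q, Om q -> has_pdR (g k) q j (D k j q)) ->
  (forall k j q, Om q -> cR Om (D k j) q) ->
  (forall k j q, Om q -> D k j q = D j k q) ->
  forall x y z, Om (x,y,z) ->
   has_pdR (Fg x0 y0 z0 g) (x,y,z) d1 (g d1 (x,y,z)) /\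
   has_pdR (Fg x0 y0 z0 g) (x,y,z) d2 (g d2 (x,y,z)) /\
   has_pdR (Fg x0 y0 z0 g) (x,y,z) d3 (g d3 (x,y,z)).
Proof.
  intros Om x0 y0 z0 g D HO HA Hc Hd HDc Hs x y z Hp.
  destruct (near3 Om x y z HO Hp) as [e [He N]].
  assert (Z : forall a, Rabs (a - a) < e) by (intros; rewrite Rminus_eq_0, Rabs_R0; auto).
  destruct (HA x y z Hp) as [S1 [S2 S3]].
  split; [|split].
  -
    apply pd1; unfold Fg.
    assert (I1 : is_derive (fun u => RInt (fun t => g d1 ((fun _ t => (t, y0, z0)) 0 t)) x0 u) x
                           (g d1 ((fun _ t => (t, y0, z0)) 0 x))).
    { apply (upper_lemma Om (fun _ t => (t, y0, z0)) (g d1) 0 x0 x); auto. apply Lip_a.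
      exists e; split; auto; intros u Hu t Ht.
      destruct (HA u y z (N u y z Hu (Z y) (Z z))) as [A _]; apply A; auto. }
    assert (I2 : is_derive (fun u => RInt (fun t => g d2 ((fun u t => (u, t, z0)) u t)) y0 y) x
                           (RInt (fun t => D d2 d1 ((fun u t => (u, t, z0)) x t)) y0 y)).
    { apply (param_lemma Om (fun u t => (u, t, z0)) (g d2) (D d2 d1) x y0 y); auto. apply Lip_b.
      - intros u t Ht; apply pd1; apply Hd; auto.
      - exists e; split; auto; intros u Hu t Ht.
        destruct (HA u y z (N u y z Hu (Z y) (Z z))) as [_ [B _]]; apply B; auto. }
    assert (I3 : is_derive (fun u => RInt (fun t => g d3 ((fun u t => (u, y, t)) u t)) z0 z) x
                           (RInt (fun t => D d3 d1 ((fun u t => (u, y, t)) x t)) z0 z)).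
    { apply (param_lemma Om (fun u t => (u, y, t)) (g d3) (D d3 d1) x z0 z); auto. apply Lip_c.
      - intros u t Ht; apply pd1; apply Hd; auto.
      - exists e; split; auto; intros u Hu t Ht.
        destruct (HA u y z (N u y z Hu (Z y) (Z z))) as [_ [_ C]]; apply C; auto. }
    assert (E2 : RInt (fun t => D d2 d1 ((fun u t => (u, t, z0)) x t)) y0 y =
                 g d1 (x, y, z0) - g d1 (x, y0, z0)).
    { rewrite (RInt_ext _ (fun t => D d1 d2 ((fun u t => (u, t, z0)) x t))).
      - apply (ftc_lemma Om (fun u t => (u, t, z0)) (g d1) (D d1 d2) x y0 y); auto. apply Lip_b.
        intros u t Ht; apply pd2; apply Hd; auto.
      - intros t Ht; apply Hs; apply S2; lra. }
    assert (E3 : RInt (fun t => D d3 d1 ((fun u t => (u, y, t)) x t)) z0 z =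
                 g d1 (x, y, z) - g d1 (x, y, z0)).
    { rewrite (RInt_ext _ (fun t => D d1 d3 ((fun u t => (u, y, t)) x t))).
      - apply (ftc_lemma Om (fun u t => (u, y, t)) (g d1) (D d1 d3) x z0 z); auto. apply Lip_c.
        intros u t Ht; apply pd3; apply Hd; auto.
      - intros t Ht; apply Hs; apply S3; lra. }
    apply (is_derive_eqv _ _ _ _ (is_derive_sum3 _ _ _ _ _ _ _ I1 I2 I3)).
    rewrite E2, E3. match goal with |- ?a = ?b => change (@eq R a b) end. ring.
  -
    apply pd2; unfold Fg.
    assert (I2 : is_derive (fun u => RInt (fun t => g d2 ((fun u t => (u, t, z0)) x t)) y0 u) y
                           (g d2 ((fun u t => (u, t, z0)) x y))).
    { apply (upper_lemma Om (fun u t => (u, t, z0)) (g d2) x y0 y); auto. apply Lip_b.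
      exists e; split; auto; intros u Hu t Ht.
      destruct (HA x u z (N x u z (Z x) Hu (Z z))) as [_ [B _]]; apply B; auto. }
    assert (I3 : is_derive (fun u => RInt (fun t => g d3 ((fun u t => (x, u, t)) u t)) z0 z) y
                           (RInt (fun t => D d3 d2 ((fun u t => (x, u, t)) y t)) z0 z)).
    { apply (param_lemma Om (fun u t => (x, u, t)) (g d3) (D d3 d2) y z0 z); auto. apply Lip_d.
      - intros u t Ht; apply pd2; apply Hd; auto.
      - exists e; split; auto; intros u Hu t Ht.
        destruct (HA x u z (N x u z (Z x) Hu (Z z))) as [_ [_ C]]; apply C; auto. }
    assert (E3 : RInt (fun t => D d3 d2 ((fun u t => (x, u, t)) y t)) z0 z =
                 g d2 (x, y, z) - g d2 (x, y, z0)).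
    { rewrite (RInt_ext _ (fun t => D d2 d3 ((fun u t => (x, u, t)) y t))).
      - apply (ftc_lemma Om (fun u t => (x, u, t)) (g d2) (D d2 d3) y z0 z); auto. apply Lip_d.
        intros u t Ht; apply pd3; apply Hd; auto.
      - intros t Ht; apply Hs; apply S3; lra. }
    apply (is_derive_eqv _ _ _ _ (is_derive_sum3 _ _ _ _ _ _ _ (is_derive_const0 _ _) I2 I3)).
    rewrite E3. match goal with |- ?a = ?b => change (@eq R a b) end. ring.
  -
    apply pd3; unfold Fg.
    assert (I3 : is_derive (fun u => RInt (fun t => g d3 ((fun u t => (x, u, t)) y t)) z0 u) z
                           (g d3 ((fun u t => (x, u, t)) y z))).
    { apply (upper_lemma Om (fun u t => (x, u, t)) (g d3) y z0 z); auto. apply Lip_d.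
      exists e; split; auto; intros u Hu t Ht.
      destruct (HA x y u (N x y u (Z x) (Z y) Hu)) as [_ [_ C]]; apply C; auto. }
    apply (is_derive_eqv _ _ _ _ (is_derive_sum3 _ _ _ _ _ _ _ (is_derive_const0 _ _) (is_derive_const0 _ _) I3)).
    match goal with |- ?a = ?b => change (@eq R a b) end. ring.
Qed.


Lemma F_cont : forall Om (F : R3 -> R) (G : dir -> R3 -> R), openS Om ->
  (forall x y z, Om (x,y,z) -> has_pdR F (x,y,z) d1 (G d1 (x,y,z)) /\
      has_pdR F (x,y,z) d2 (G d2 (x,y,z)) /\ has_pdR F (x,y,z) d3 (G d3 (x,y,z))) ->
  (forall k q, Om q -> cR Om (G k) q) ->
  forall p, Om p -> cR Om F p.
Proof.
  intros Om F G HO HD HG [[x y] z] Hp eps Heps.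
  destruct (near3 Om x y z HO Hp) as [e0 [He0 N]].
  destruct (HG d1 _ Hp 1 Rlt_0_1) as [a1 [Ha1 K1]].
  destruct (HG d2 _ Hp 1 Rlt_0_1) as [a2 [Ha2 K2]].
  destruct (HG d3 _ Hp 1 Rlt_0_1) as [a3 [Ha3 K3]].
  set (r := Rmin e0 (Rmin a1 (Rmin a2 a3))).
  assert (Hr : 0 < r) by (unfold r; repeat apply Rmin_pos; auto).
  assert (r1 : r <= e0) by (unfold r; apply Rmin_l).
  assert (r2 : r <= a1) by (unfold r; eapply Rle_trans; [apply Rmin_r|apply Rmin_l]).
  assert (r3 : r <= a2) by (unfold r; eapply Rle_trans; [apply Rmin_r|]; eapply Rle_trans; [apply Rmin_r|apply Rmin_l]).
  assert (r4 : r <= a3) by (unfold r; eapply Rle_trans; [apply Rmin_r|]; eapply Rle_trans; [apply Rmin_r|apply Rmin_r]).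
  set (M := Rabs (G d1 (x,y,z)) + Rabs (G d2 (x,y,z)) + Rabs (G d3 (x,y,z)) + 1).
  assert (HM : 0 < M) by (unfold M; pose proof (Rabs_pos (G d1 (x,y,z)));
    pose proof (Rabs_pos (G d2 (x,y,z))); pose proof (Rabs_pos (G d3 (x,y,z))); lra).
  assert (Box : forall a b c, Rabs (a - x) < r -> Rabs (b - y) < r -> Rabs (c - z) < r ->
     Om (a,b,c) /\ forall k, Rabs (G k (a,b,c)) <= M).
  { intros a b c Ha Hb Hc.
    assert (Om (a,b,c)) by (apply N; lra).
    assert (Hd : forall a', r <= a' -> dist3 (x,y,z) (a,b,c) < a').
    { intros; apply dist3_lt; rewrite ?(Rabs_minus_sym x a), ?(Rabs_minus_sym y b), ?(Rabs_minus_sym z c); lra. }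
    split; auto; intros k.
    pose proof (Rabs_pos (G d1 (x,y,z)));
    pose proof (Rabs_pos (G d2 (x,y,z))); pose proof (Rabs_pos (G d3 (x,y,z))).
    destruct k; [specialize (K1 (a,b,c) H (Hd _ r2)) | specialize (K2 (a,b,c) H (Hd _ r3))
                | specialize (K3 (a,b,c) H (Hd _ r4))];
    match goal with Hk : Rabs (?u - ?v) < 1 |- _ =>
      pose proof (Rabs_triang_inv u v) end; unfold M; lra. }
  set (del := Rmin r (eps / (3 * M))).
  exists del; split; [unfold del; apply Rmin_pos; auto; apply Rdiv_lt_0_compat; lra|].
  intros [[a b] c] Hq Hpq.
  apply dist3_comp in Hpq; destruct Hpq as [Ha [Hb Hc]].
  rewrite Rabs_minus_sym in Ha, Hb, Hc.
  assert (del <= r) by apply Rmin_l.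
  assert (del <= eps / (3 * M)) by apply Rmin_r.
  assert (B3 : Rabs (F (a,b,c) - F (a,b,z)) <= M * Rabs (c - z)).
  { apply (bounded_variation (fun t => F (a,b,t)) (fun t => G d3 (a,b,t))).
    intros t Ht; destruct (Box a b t) as [Om' Bd]; try lra.
    split; [apply pd3; apply HD; auto|apply Bd]. }
  assert (B2 : Rabs (F (a,b,z) - F (a,y,z)) <= M * Rabs (b - y)).
  { apply (bounded_variation (fun t => F (a,t,z)) (fun t => G d2 (a,t,z))).
    intros t Ht; destruct (Box a t z) as [Om' Bd]; try lra.
    rewrite Rminus_eq_0, Rabs_R0; lra.
    split; [apply pd2; apply HD; auto|apply Bd]. }
  assert (B1 : Rabs (F (a,y,z) - F (x,y,z)) <= M * Rabs (a - x)).
  { apply (bounded_variation (fun t => F (t,y,z)) (fun t => G d1 (t,y,z))).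
    intros t Ht; destruct (Box t y z) as [Om' Bd]; try lra.
    rewrite Rminus_eq_0, Rabs_R0; lra.
    rewrite Rminus_eq_0, Rabs_R0; lra.
    split; [apply pd1; apply HD; auto|apply Bd]. }
  assert (T : Rabs (F (a,b,c) - F (x,y,z)) <=
     Rabs (F (a,b,c) - F (a,b,z)) + Rabs (F (a,b,z) - F (a,y,z)) + Rabs (F (a,y,z) - F (x,y,z))).
  { replace (F (a,b,c) - F (x,y,z)) with
      ((F (a,b,c) - F (a,b,z)) + (F (a,b,z) - F (a,y,z)) + (F (a,y,z) - F (x,y,z))) by ring.
    eapply Rle_trans; [apply Rabs_triang|]; apply Rplus_le_compat_r; apply Rabs_triang. }
  assert (M * Rabs (c - z) < M * (eps / (3 * M))) by (apply Rmult_lt_compat_l; lra).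
  assert (M * Rabs (b - y) < M * (eps / (3 * M))) by (apply Rmult_lt_compat_l; lra).
  assert (M * Rabs (a - x) < M * (eps / (3 * M))) by (apply Rmult_lt_compat_l; lra).
  assert (E : M * (eps / (3 * M)) = eps / 3) by (field; lra).
  lra.
Qed.


Lemma shift_comm : forall p j k s t, shift (shift p j s) k t = shift (shift p k t) j s.
Proof.
  intros [[x y] z] [] [] s t; simpl; try reflexivity; rewrite !Rplus_assoc, (Rplus_comm s t); reflexivity.
Qed.

Section Sch.
Variable p : R3.
Variables j k : dir.
Definition qq (u v : R) := shift (shift p j u) k v.

Lemma Lj : forall g u v l, has_pdR g (qq u v) j l -> is_derive (fun z => g (qq z v)) u l.
Proof.
  intros g u v l H; unfold has_pdR in H; apply is_derive_Reals in H.
  apply is_derive_Reals; apply (dpl_trans (fun z => g (qq z v))); apply is_derive_Reals.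
  apply (is_derive_ext (fun t => g (shift (qq u v) j t))); auto.
  intros t; unfold qq; rewrite <- shift_add, shift_comm; reflexivity.
Qed.

Lemma Lk : forall g u v l, has_pdR g (qq u v) k l -> is_derive (fun z => g (qq u z)) v l.
Proof.
  intros g u v l H; unfold has_pdR in H; apply is_derive_Reals in H.
  apply is_derive_Reals; apply (dpl_trans (fun z => g (qq u z))); apply is_derive_Reals.
  apply (is_derive_ext (fun t => g (shift (qq u v) k t))); auto.
  intros t; unfold qq; rewrite shift_add; reflexivity.
Qed.

Lemma qq_dist : forall u v, dist3 p (qq u v) <= Rabs u + Rabs v.
Proof.
  intros u v; unfold qq; eapply Rle_trans; [apply (dist3_tri _ (shift p j u))|].
  rewrite !dist3_shift; lra.
Qed.

Lemma qq0 : qq 0 0 = p.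
Proof. unfold qq; rewrite !shift0; reflexivity. Qed.
End Sch.

Lemma schwarz3 : forall Om (f : R3 -> R) (Df : dir -> R3 -> R) (DDf : dir -> dir -> R3 -> R) p j k,
  openS Om -> Om p ->
  (forall k q, Om q -> has_pdR f q k (Df k q)) ->
  (forall k j q, Om q -> has_pdR (Df k) q j (DDf k j q)) ->
  (forall k j q, Om q -> cR Om (DDf k j) q) ->
  DDf k j p = DDf j k p.
Proof.
  intros Om f Df DDf p j k HO Hp Hf HDf HC.
  destruct (HO p Hp) as [e [He Ball]].
  set (h := fun u v => f (qq p j k u v)).
  assert (InOm : forall u v, Rabs u < e / 2 -> Rabs v < e / 2 -> Om (qq p j k u v)).
  { intros u v Hu Hv; apply Ball; eapply Rle_lt_trans; [apply qq_dist|]; lra. }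
  assert (D1 : forall u v, Rabs u < e/2 -> Rabs v < e/2 ->
     Derive (fun t => h u t) v = Df k (qq p j k u v)).
  { intros; apply is_derive_unique; apply (Lk p j k f); apply Hf; auto. }
  assert (D2 : forall u v, Rabs u < e/2 -> Rabs v < e/2 ->
     Derive (fun t => h t v) u = Df j (qq p j k u v)).
  { intros; apply is_derive_unique; apply (Lj p j k f); apply Hf; auto. }
  assert (S1 : forall u v, Rabs u < e/4 -> Rabs v < e/4 ->
     is_derive (fun z => Derive (fun t => h z t) v) u (DDf k j (qq p j k u v))).
  { intros u v Hu Hv.
    apply (is_derive_ext_loc (fun z => Df k (qq p j k z v))).
    - apply locally_R; exists (e/4); split; [lra|]; intros z Hz.
      symmetry; apply D1.
      + pose proof (Rabs_triang (z - u) u); replace (z - u + u) with z in * by ring; lra.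
      + lra.
    - apply (Lj p j k (Df k)); apply HDf; apply InOm; lra. }
  assert (S2 : forall u v, Rabs u < e/4 -> Rabs v < e/4 ->
     is_derive (fun z => Derive (fun t => h t z) u) v (DDf j k (qq p j k u v))).
  { intros u v Hu Hv.
    apply (is_derive_ext_loc (fun z => Df j (qq p j k u z))).
    - apply locally_R; exists (e/4); split; [lra|]; intros z Hz.
      symmetry; apply D2.
      + lra.
      + pose proof (Rabs_triang (z - v) v); replace (z - v + v) with z in * by ring; lra.
    - apply (Lk p j k (Df j)); apply HDf; apply InOm; lra. }
  assert (Z : Rabs 0 < e / 4) by (rewrite Rabs_R0; lra).
  assert (CC : forall a b, continuity_2d_pt (fun u v => DDf a b (qq p j k u v)) 0 0).
  { intros a b eps. destruct (HC a b p Hp eps (cond_pos eps)) as [d [Hd K]].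
    assert (0 < Rmin d e / 2) by (apply Rdiv_lt_0_compat; [apply Rmin_pos|]; lra).
    exists (mkposreal _ H); simpl; intros u v Hu Hv.
    rewrite Rminus_0_r in Hu, Hv. rewrite qq0.
    pose proof (Rmin_l d e); pose proof (Rmin_r d e).
    apply K.
    - apply InOm; lra.
    - eapply Rle_lt_trans; [apply qq_dist|]; lra. }
  pose proof (Schwarz h 0 0) as SW.
  assert (E1 : Derive (fun z => Derive (fun t => h z t) 0) 0 = DDf k j p).
  { rewrite <- (qq0 p j k); apply is_derive_unique; apply S1; auto. }
  assert (E2 : Derive (fun z => Derive (fun t => h t z) 0) 0 = DDf j k p).
  { rewrite <- (qq0 p j k); apply is_derive_unique; apply S2; auto. }
  rewrite <- E1, <- E2; apply SW.
  - exists (mkposreal (e/4) ltac:(lra)); simpl; intros u v Hu Hv.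
    rewrite Rminus_0_r in Hu, Hv.
    split; [|split; [|split]].
    + exists (Df j (qq p j k u v)); apply (Lj p j k f); apply Hf; apply InOm; lra.
    + exists (Df k (qq p j k u v)); apply (Lk p j k f); apply Hf; apply InOm; lra.
    + eexists; apply S1; auto.
    + eexists; apply S2; auto.
  - apply (c2d_ext _ (fun u v => DDf k j (qq p j k u v))); [|apply CC].
    exists (e/4); split; [lra|]; intros u v Hu Hv; rewrite Rminus_0_r in Hu, Hv.
    apply is_derive_unique; apply S1; auto.
  - apply (c2d_ext _ (fun u v => DDf j k (qq p j k u v))); [|apply CC].
    exists (e/4); split; [lra|]; intros u v Hu Hv; rewrite Rminus_0_r in Hu, Hv.
    apply is_derive_unique; apply S2; auto.
Qed.


Lemma H_eq : forall a b : HC, h0 a = h0 b -> h1 a = h1 b -> h2 a = h2 b -> h3 a = h3 b -> a = b.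
Proof. intros [] []; simpl; intros; subst; reflexivity. Qed.

Definition comp (k : dir) (X : HC) : Cx :=
  match k with d1 => h1 X | d2 => h2 X | d3 => h3 X end.

Definition Qf (a b c P : Cx) := Cmul (Copp (Cinv a)) (Cadd b (Cmul c (Cinv P))).
Definition dQf (a b c P la lb lc lP : Cx) :=
  Cadd (Cmul (Copp (Copp (Cmul la (Cmul (Cinv a) (Cinv a))))) (Cadd b (Cmul c (Cinv P))))
       (Cmul (Copp (Cinv a)) (Cadd lb (Cadd (Cmul lc (Cinv P))
                                           (Cmul c (Copp (Cmul lP (Cmul (Cinv P) (Cinv P)))))))).

Lemma pd_Qf : forall a b c P p k la lb lc lP,
  has_pdC a p k la -> has_pdC b p k lb -> has_pdC c p k lc -> has_pdC P p k lP ->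
  a p <> C0 -> P p <> C0 ->
  has_pdC (fun q => Qf (a q) (b q) (c q) (P q)) p k (dQf (a p) (b p) (c p) (P p) la lb lc lP).
Proof.
  intros; unfold Qf, dQf.
  apply pdC_mul; [apply pdC_opp; apply pdC_inv; auto|].
  apply pdC_add; auto. apply pdC_mul; auto. apply pdC_inv; auto.
Qed.

Lemma Qform : forall a G W s,
  Hmul (Hscalar a) (Hadd G (Hmul W (Hscalar s))) =
  mkH (Cmul a (Cadd (h0 G) (Cmul (h0 W) s))) (Cmul a (Cadd (h1 G) (Cmul (h1 W) s)))
      (Cmul a (Cadd (h2 G) (Cmul (h2 W) s))) (Cmul a (Cadd (h3 G) (Cmul (h3 W) s))).
Proof.
  intros a [g0 g1 g2 g3] [w0 w1 w2 w3] s; apply H_eq; cbn [h0 h1 h2 h3 Hmul Hadd Hscalar]; ring.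
Qed.

Lemma neg_zero : forall x y : Cx, x = Copp y -> y = C0 -> x = C0.
Proof. intros x y -> ->; ring. Qed.
Lemma pos_zero : forall x y : Cx, x = y -> y = C0 -> x = C0.
Proof. intros x y -> ->; ring. Qed.

Lemma weq_alg : forall (W : HC) (DW : dir -> HC) (DP : dir -> Cx) (ph : Cx),
  ph <> C0 -> h0 W = C0 -> (forall k, h0 (DW k) = C0) ->
  Hadd (Dsum DW) (Hmul W (Hmul (gradH DP) (Hscalar (Cinv ph)))) = H0 ->
  Cadd (Cadd (Cadd (comp d1 (DW d1)) (comp d2 (DW d2))) (comp d3 (DW d3)))
     (Cmul (Cadd (Cadd (Cmul (comp d1 W) (DP d1)) (Cmul (comp d2 W) (DP d2))) (Cmul (comp d3 W) (DP d3))) (Cinv ph)) = C0 /\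
  Csub (Csub (comp d3 (DW d2)) (comp d2 (DW d3)))
     (Cmul (Csub (Cmul (comp d3 W) (DP d2)) (Cmul (comp d2 W) (DP d3))) (Cinv ph)) = C0 /\
  Csub (Csub (comp d1 (DW d3)) (comp d3 (DW d1)))
     (Cmul (Csub (Cmul (comp d1 W) (DP d3)) (Cmul (comp d3 W) (DP d1))) (Cinv ph)) = C0 /\
  Csub (Csub (comp d2 (DW d1)) (comp d1 (DW d2)))
     (Cmul (Csub (Cmul (comp d2 W) (DP d1)) (Cmul (comp d1 W) (DP d2))) (Cinv ph)) = C0.
Proof.
  intros W DW DP ph Hph HW0 HD0 E.
  pose proof (f_equal h0 E) as E0; pose proof (f_equal h1 E) as E1;
  pose proof (f_equal h2 E) as E2; pose proof (f_equal h3 E) as E3.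
  pose proof (HD0 d1) as A1; pose proof (HD0 d2) as A2; pose proof (HD0 d3) as A3.
  destruct W as [w0 w1 w2 w3].
  cbn [h0 h1 h2 h3 comp] in *. subst.
  cbn [h0 h1 h2 h3 Hadd Hmul Dsum gradH Hscalar Hvec e1 e2 e3 H0] in E0, E1, E2, E3.
  split; [|split; [|split]].
  - rewrite !HD0 in E0; refine (neg_zero _ _ _ E0); ring.
  - rewrite !HD0 in E1; refine (pos_zero _ _ _ E1); ring.
  - rewrite !HD0 in E2; refine (pos_zero _ _ _ E2); ring.
  - rewrite !HD0 in E3; refine (pos_zero _ _ _ E3); ring.
Qed.


Lemma solve1 : forall a b c : Cx, Csub (Csub a b) c = C0 -> a = Cadd b c.
Proof. intros a b c H. transitivity (Cadd (Csub (Csub a b) c) (Cadd b c)); [ring|rewrite H; ring]. Qed.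
Lemma solve_sch : forall a b c d : Cx, Csub (Cadd (Cadd a b) c) d = C0 -> a = Csub (Csub d b) c.
Proof. intros a b c d H. transitivity (Cadd (Csub (Cadd (Cadd a b) c) d) (Csub (Csub d b) c)); [ring|rewrite H; ring]. Qed.
Lemma solve_div : forall a b c d : Cx, Cadd (Cadd (Cadd a b) c) d = C0 -> a = Copp (Cadd (Cadd b c) d).
Proof. intros a b c d H. transitivity (Cadd (Cadd (Cadd (Cadd a b) c) d) (Copp (Cadd (Cadd b c) d))); [ring|rewrite H; ring]. Qed.

Lemma ric_alg : forall (ph P qv : Cx) (g W : dir -> Cx) (G DW : dir -> dir -> Cx),
 ph <> C0 -> P <> C0 ->
 Csub (Cadd (Cadd (G d1 d1) (G d2 d2)) (G d3 d3)) (Cmul qv ph) = C0 ->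
 G d3 d2 = G d2 d3 -> G d1 d3 = G d3 d1 -> G d2 d1 = G d1 d2 ->
 Cadd (Cadd (Cadd (DW d1 d1) (DW d2 d2)) (DW d3 d3))
   (Cmul (Cadd (Cadd (Cmul (W d1) (g d1)) (Cmul (W d2) (g d2))) (Cmul (W d3) (g d3))) (Cinv ph)) = C0 ->
 Csub (Csub (DW d3 d2) (DW d2 d3)) (Cmul (Csub (Cmul (W d3) (g d2)) (Cmul (W d2) (g d3))) (Cinv ph)) = C0 ->
 Csub (Csub (DW d1 d3) (DW d3 d1)) (Cmul (Csub (Cmul (W d1) (g d3)) (Cmul (W d3) (g d1))) (Cinv ph)) = C0 ->
 Csub (Csub (DW d2 d1) (DW d1 d2)) (Cmul (Csub (Cmul (W d2) (g d1)) (Cmul (W d1) (g d2))) (Cinv ph)) = C0 ->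
 Hadd (Dsum (fun k => mkH (dQf ph C0 C0 P (g k) C0 C0 (Cmul (W k) (Cinv ph)))
                          (dQf ph (g d1) (W d1) P (g k) (G d1 k) (DW d1 k) (Cmul (W k) (Cinv ph)))
                          (dQf ph (g d2) (W d2) P (g k) (G d2 k) (DW d2 k) (Cmul (W k) (Cinv ph)))
                          (dQf ph (g d3) (W d3) P (g k) (G d3 k) (DW d3 k) (Cmul (W k) (Cinv ph)))))
      (Hscalar (Cadd (Cadd (Cmul (Qf ph (g d1) (W d1) P) (Qf ph (g d1) (W d1) P))
                           (Cmul (Qf ph (g d2) (W d2) P) (Qf ph (g d2) (W d2) P)))
                     (Cmul (Qf ph (g d3) (W d3) P) (Qf ph (g d3) (W d3) P))))
  = Hscalar qv.
Proof.
  intros ph P qv g W G DW Hph HP Hs S32 S13 S21 Hd C32 C13 C21.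
  apply solve_sch in Hs. apply solve_div in Hd.
  apply solve1 in C32. apply solve1 in C13. apply solve1 in C21.
  apply H_eq; cbn [h0 h1 h2 h3 Hadd Hmul Dsum Hscalar e1 e2 e3 Hvec]; unfold Qf, dQf.
  - rewrite Hd, Hs. field; auto.
  - rewrite C32, S32. field; auto.
  - rewrite C13, S13. field; auto.
  - rewrite C21, S21. field; auto.
Qed.

Lemma sch_alg : forall (half ph P qv : Cx) (g W : dir -> Cx) (G DW : dir -> dir -> Cx),
 ph <> C0 ->
 Csub (Cadd (Cadd (G d1 d1) (G d2 d2)) (G d3 d3)) (Cmul qv ph) = C0 ->
 Cadd (Cadd (Cadd (DW d1 d1) (DW d2 d2)) (DW d3 d3))
   (Cmul (Cadd (Cadd (Cmul (W d1) (g d1)) (Cmul (W d2) (g d2))) (Cmul (W d3) (g d3))) (Cinv ph)) = C0 ->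
 let psi := fun k => Cmul (W k) (Cinv ph) in
 let dpsi := fun k j => Cadd (Cmul (DW k j) (Cinv ph))
                (Cmul (W k) (Copp (Cmul (g j) (Cmul (Cinv ph) (Cinv ph))))) in
 let dd := fun k j => Cmul half (Cadd (Cadd (Cmul (G k j) P) (Cmul (g k) (psi j)))
                                      (Cadd (Cmul (g j) (psi k)) (Cmul ph (dpsi k j)))) in
 Cadd (Copp (Cadd (Cadd (dd d1 d1) (dd d2 d2)) (dd d3 d3))) (Cmul qv (Cmul half (Cmul ph P))) = C0.
Proof.
  intros half ph P qv g W G DW Hph Hs Hd psi dpsi dd.
  apply solve_sch in Hs. apply solve_div in Hd.
  unfold dd, psi, dpsi. rewrite Hd, Hs. field; auto.
Qed.


Theorem proposition2
  (Om : R3 -> Prop) (q phi : R3 -> Cx) (w : R3 -> HC) (x0 y0 z0 : R) :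
  is_domain Om ->
  contC Om q ->
  schr_solution Om q phi ->
  (forall p, Om p -> phi p <> C0) ->
  C1H Om w ->
  (forall p, Om p -> h0 (w p) = C0) ->
  (* D w + w (D phi / phi) = 0 in Om *)
  (forall p, Om p -> exists (dw : dir -> HC) (dphi : dir -> Cx),
      (forall k, has_pdH w p k (dw k)) /\ (forall k, has_pdC phi p k (dphi k)) /\
      Hadd (Dsum dw) (Hmul (w p) (Hmul (gradH dphi) (Hscalar (Cinv (phi p))))) = H0) ->
  Om (x0, y0, z0) ->
  A_segments_in Om x0 y0 z0 ->
  forall (c : Cx) (Phi : R3 -> Cx),
    is_A Om (fun p => Cmul (h1 (w p)) (Cinv (phi p)))
            (fun p => Cmul (h2 (w p)) (Cinv (phi p)))
            (fun p => Cmul (h3 (w p)) (Cinv (phi p))) x0 y0 z0 c Phi ->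
    schr_solution Om q (fun p => Cmul (CofR (1/2)) (Cmul (phi p) (Phi p))) /\
    (forall dphi : dir -> R3 -> Cx,
      (forall k p, Om p -> has_pdC phi p k (dphi k p)) ->
      let Q := fun p =>
        Hmul (Hscalar (Copp (Cinv (phi p))))
             (Hadd (gradH (fun k => dphi k p)) (Hmul (w p) (Hscalar (Cinv (Phi p))))) in
      forall p, Om p -> Phi p <> C0 ->
        exists dQ : dir -> HC,
          (forall k, has_pdH Q p k (dQ k)) /\
          Hadd (Dsum dQ)
               (Hscalar (Cadd (Cadd (Cmul (h1 (Q p)) (h1 (Q p))) (Cmul (h2 (Q p)) (h2 (Q p))))
                              (Cmul (h3 (Q p)) (h3 (Q p))))) = Hscalar (q p)).
Proof.
  intros [HO _] Hq [Hphi2 Hphis] Hnz Hw Hw0 Heq Hx0 HA c Phi HPhi.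
  destruct Hphi2 as [Hphic [dph [Hdph Hdph1]]].
  assert (Hdd : exists ddph : dir -> dir -> R3 -> Cx,
     (forall k j p, Om p -> has_pdC (dph k) p j (ddph k j p)) /\ (forall k j, contC Om (ddph k j))).
  { destruct (Hdph1 d1) as [_ [a [A1 A2]]]; destruct (Hdph1 d2) as [_ [b [B1 B2]]];
    destruct (Hdph1 d3) as [_ [cc [C1' C2']]].
    exists (fun k => match k with d1 => a | d2 => b | d3 => cc end); split; intros []; auto. }
  destruct Hdd as [ddph [Hddph Hddphc]].
  assert (Hdphc : forall k, contC Om (dph k)) by (intros k; destruct (Hdph1 k); auto).
  destruct Hw as [[Hw0c [dw0 [Hdw0 Hdw0c]]] [[Hw1c [dw1 [Hdw1 Hdw1c]]]
                 [[Hw2c [dw2 [Hdw2 Hdw2c]]] [Hw3c [dw3 [Hdw3 Hdw3c]]]]]].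
  pose (dwc := fun k => match k with d1 => dw1 | d2 => dw2 | d3 => dw3 end).
  assert (Hdwc : forall k j p, Om p -> has_pdC (fun q => comp k (w q)) p j (dwc k j p))
    by (intros [] j p Hp; simpl; auto).
  assert (Hdwcc : forall k j, contC Om (dwc k j)) by (intros [] j; simpl; auto).
  assert (Hwcc : forall k, contC Om (fun q => comp k (w q))) by (intros []; simpl; auto).
  assert (Hdw00 : forall j p, Om p -> dw0 j p = C0).
  { intros j p Hp. apply (pdC_unique_Om Om (fun q => h0 (w q)) (fun _ => C0) p j); auto.
    apply pdC_const. }
  pose (psi := fun k p => Cmul (comp k (w p)) (Cinv (phi p))).
  pose (dpsi := fun k j p => Cadd (Cmul (dwc k j p) (Cinv (phi p)))
            (Cmul (comp k (w p)) (Copp (Cmul (dph j p) (Cmul (Cinv (phi p)) (Cinv (phi p))))))).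
  assert (Hpsi : forall k j p, Om p -> has_pdC (psi k) p j (dpsi k j p)).
  { intros k j p Hp; apply pdC_mul; [apply Hdwc; auto|apply pdC_inv; auto]. }
  assert (Hpsic : forall k p, Om p -> cC Om (psi k) p).
  { intros k p Hp; apply cC_mul; [apply contC_cC; auto|apply cC_inv; auto; apply contC_cC; auto]. }
  assert (Hdpsic : forall k j p, Om p -> cC Om (dpsi k j) p).
  { intros k j p Hp.
    assert (Ci : cC Om (fun q => Cinv (phi q)) p) by (apply cC_inv; auto; apply contC_cC; auto).
    apply cC_add; apply cC_mul.
    - apply contC_cC; auto.
    - exact Ci.
    - apply contC_cC; auto.
    - apply cC_opp; apply cC_mul; [apply contC_cC; auto|]; apply cC_mul; exact Ci. }
  assert (Hrel : forall p, Om p ->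
    Cadd (Cadd (Cadd (dwc d1 d1 p) (dwc d2 d2 p)) (dwc d3 d3 p))
     (Cmul (Cadd (Cadd (Cmul (comp d1 (w p)) (dph d1 p)) (Cmul (comp d2 (w p)) (dph d2 p))) (Cmul (comp d3 (w p)) (dph d3 p))) (Cinv (phi p))) = C0 /\
    Csub (Csub (dwc d3 d2 p) (dwc d2 d3 p))
     (Cmul (Csub (Cmul (comp d3 (w p)) (dph d2 p)) (Cmul (comp d2 (w p)) (dph d3 p))) (Cinv (phi p))) = C0 /\
    Csub (Csub (dwc d1 d3 p) (dwc d3 d1 p))
     (Cmul (Csub (Cmul (comp d1 (w p)) (dph d3 p)) (Cmul (comp d3 (w p)) (dph d1 p))) (Cinv (phi p))) = C0 /\
    Csub (Csub (dwc d2 d1 p) (dwc d1 d2 p))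
     (Cmul (Csub (Cmul (comp d2 (w p)) (dph d1 p)) (Cmul (comp d1 (w p)) (dph d2 p))) (Cinv (phi p))) = C0).
  { intros p Hp. destruct (Heq p Hp) as [dw [dphi' [Hdw [Hdphi' E]]]].
    assert (U1 : forall k, dphi' k = dph k p) by (intros k; eapply pdC_unique; eauto).
    assert (U2 : forall i j, comp i (dw j) = dwc i j p).
    { intros [] j; destruct (Hdw j) as [_ [A [B C']]]; eapply pdC_unique; eauto; apply Hdwc; auto. }
    assert (U3 : forall k, h0 (dw k) = C0).
    { intros k; destruct (Hdw k) as [A _]; rewrite <- (Hdw00 k p Hp); eapply pdC_unique; eauto. }
    pose proof (weq_alg (w p) dw dphi' (phi p) (Hnz p Hp) (Hw0 p Hp) U3 E) as W.
    rewrite !U2, !U1 in W; exact W. }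
  assert (Hsym : forall k j p, Om p -> dpsi k j p = dpsi j k p).
  { intros k j p Hp; destruct (Hrel p Hp) as [_ [C32 [C13 C21]]].
    pose proof (Hnz p Hp).
    apply solve1 in C32; apply solve1 in C13; apply solve1 in C21.
    unfold dpsi; destruct k, j; try reflexivity;
    first [rewrite C32|rewrite C13|rewrite C21]; field; auto. }
  pose (gR := fun k q => Re (psi k q)). pose (gI := fun k q => Im (psi k q)).
  pose (DR := fun k j q => Re (dpsi k j q)). pose (DI := fun k j q => Im (dpsi k j q)).
  assert (HFR := F_deriv Om x0 y0 z0 gR DR HO HA
     (fun k q Hq => proj1 (Hpsic k q Hq)) (fun k j q Hq => proj1 (Hpsi k j q Hq))
     (fun k j q Hq => proj1 (Hdpsic k j q Hq)) (fun k j q Hq => f_equal Re (Hsym k j q Hq))).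
  assert (HFI := F_deriv Om x0 y0 z0 gI DI HO HA
     (fun k q Hq => proj2 (Hpsic k q Hq)) (fun k j q Hq => proj2 (Hpsi k j q Hq))
     (fun k j q Hq => proj2 (Hdpsic k j q Hq)) (fun k j q Hq => f_equal Im (Hsym k j q Hq))).
  assert (HPhiF : forall p, Om p -> Re (Phi p) = Fg x0 y0 z0 gR p + Re c /\
                                    Im (Phi p) = Fg x0 y0 z0 gI p + Im c).
  { intros [[x y] z] Hp. destruct (HPhi x y z Hp) as [v1 [v2 [v3 [[[pr1 R1] [pi1 I1]] [[[pr2 R2] [pi2 I2]] [[[pr3 R3] [pi3 I3]] EP]]]]]].
    rewrite EP; unfold Fg; cbn [Re Im Cadd]. split.
    - rewrite <- R1, <- R2, <- R3.
      rewrite <- (RInt_Reals _ _ _ pr1), <- (RInt_Reals _ _ _ pr2), <- (RInt_Reals _ _ _ pr3).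
      reflexivity.
    - rewrite <- I1, <- I2, <- I3.
      rewrite <- (RInt_Reals _ _ _ pi1), <- (RInt_Reals _ _ _ pi2), <- (RInt_Reals _ _ _ pi3).
      reflexivity. }

  assert (HPhid : forall k p, Om p -> has_pdC Phi p k (psi k p)).
  { intros k [[x y] z] Hp. destruct (HFR x y z Hp) as [R1 [R2 R3]]. destruct (HFI x y z Hp) as [I1 [I2 I3]].
    split.
    - apply (pdR_loc_Om Om (fun q => Fg x0 y0 z0 gR q + Re c)); auto.
      + intros q' Hq'; symmetry; apply (HPhiF q' Hq').
      + destruct k; (eapply pdR_eq; [apply pdR_plus; [|apply pdR_const]|]);
        [exact R1| |exact R2| |exact R3|]; unfold gR; ring.
    - apply (pdR_loc_Om Om (fun q => Fg x0 y0 z0 gI q + Im c)); auto.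
      + intros q' Hq'; symmetry; apply (HPhiF q' Hq').
      + destruct k; (eapply pdR_eq; [apply pdR_plus; [|apply pdR_const]|]);
        [exact I1| |exact I2| |exact I3|]; unfold gI; ring. }
  assert (HPhic : forall p, Om p -> cC Om Phi p).
  { intros p Hp; split.
    - apply (cR_ext Om (fun q => Fg x0 y0 z0 gR q + Re c)); auto.
      + intros q' Hq'; symmetry; apply (HPhiF q' Hq').
      + apply cR_plus; [|apply cR_const].
        exact (F_cont Om (Fg x0 y0 z0 gR) gR HO HFR (fun k q Hq => proj1 (Hpsic k q Hq)) p Hp).
    - apply (cR_ext Om (fun q => Fg x0 y0 z0 gI q + Im c)); auto.
      + intros q' Hq'; symmetry; apply (HPhiF q' Hq').
      + apply cR_plus; [|apply cR_const].
        exact (F_cont Om (Fg x0 y0 z0 gI) gI HO HFI (fun k q Hq => proj2 (Hpsic k q Hq)) p Hp). }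
  assert (HSch : forall p, Om p ->
     Csub (Cadd (Cadd (ddph d1 d1 p) (ddph d2 d2 p)) (ddph d3 d3 p)) (Cmul (q p) (phi p)) = C0).
  { intros p Hp; destruct (Hphis p Hp) as [df [dd [Hdf [Hdd' E]]]].
    assert (U : forall k, dd k = ddph k k p).
    { intros k; apply (pdC_unique_Om Om (df k) (dph k) p k); auto.
      intros q' Hq'; eapply pdC_unique; [apply Hdf|apply Hdph]; auto. }
    rewrite !U in E. refine (neg_zero _ _ _ E); ring. }
  pose (half := CofR (1/2)).
  pose (dW0 := fun k p => Cmul half (Cadd (Cmul (dph k p) (Phi p)) (Cmul (phi p) (psi k p)))).
  pose (ddW0 := fun k j p => Cmul half (Cadd (Cadd (Cmul (ddph k j p) (Phi p)) (Cmul (dph k p) (psi j p)))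
                                      (Cadd (Cmul (dph j p) (psi k p)) (Cmul (phi p) (dpsi k j p))))).
  assert (HdW0 : forall k p, Om p -> has_pdC (fun p => Cmul (CofR (1/2)) (Cmul (phi p) (Phi p))) p k (dW0 k p)).
  { intros k p Hp. eapply pdC_eq; [apply pdC_mul; [apply pdC_const|apply pdC_mul; [apply Hdph; auto|apply HPhid; auto]]|].
    unfold dW0, half; ring. }
  assert (HddW0 : forall k j p, Om p -> has_pdC (dW0 k) p j (ddW0 k j p)).
  { intros k j p Hp. unfold dW0.
    eapply pdC_eq; [apply pdC_mul; [apply pdC_const|apply pdC_add; apply pdC_mul;
      [apply Hddph; auto|apply HPhid; auto|apply Hdph; auto|apply Hpsi; auto]]|].
    unfold ddW0, half; ring. }
  split.
  { split.
    - split.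
      + apply cC_contC; intros p Hp; apply cC_mul; [apply cC_const|apply cC_mul; [apply contC_cC; auto|apply HPhic; auto]].
      + exists dW0; split; [exact HdW0|].
        intros k; split.
        * apply cC_contC; intros p Hp; unfold dW0; apply cC_mul; [apply cC_const|];
          apply cC_add; apply cC_mul; try (apply HPhic; auto); try (apply Hpsic; auto); apply contC_cC; auto.
        * exists (ddW0 k); split; [intros j p Hp; apply HddW0; auto|].
          intros j; apply cC_contC; intros p Hp; unfold ddW0; apply cC_mul; [apply cC_const|].
          apply cC_add; apply cC_add; apply cC_mul;
            first [apply HPhic; auto | apply Hpsic; auto | apply Hdpsic; auto | apply contC_cC; auto].
    - intros p Hp. exists dW0, (fun k => ddW0 k k p).
      split; [exact HdW0|split; [intros k; apply HddW0; auto|]].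
      exact (sch_alg half (phi p) (Phi p) (q p) (fun k => dph k p) (fun k => comp k (w p))
               (fun k j => ddph k j p) (fun k j => dwc k j p) (Hnz p Hp) (HSch p Hp) (proj1 (Hrel p Hp))). }
  intros dphi Hdphi Q p Hp HP0.
  assert (Udphi : forall j q', Om q' -> dphi j q' = dph j q') by (intros; eapply pdC_unique; eauto).
  assert (Hdphi2 : forall j k, has_pdC (dphi j) p k (ddph j k p)).
  { intros j k; apply (pdC_loc_Om Om (dph j)); auto. intros q' Hq'; symmetry; auto. }
  assert (HQ : forall q', Q q' = mkH (Qf (phi q') C0 (h0 (w q')) (Phi q'))
       (Qf (phi q') (dphi d1 q') (h1 (w q')) (Phi q'))
       (Qf (phi q') (dphi d2 q') (h2 (w q')) (Phi q')) (Qf (phi q') (dphi d3 q') (h3 (w q')) (Phi q'))).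
  { intros q'; unfold Q; rewrite Qform; reflexivity. }
  assert (HG : forall k j, ddph k j p = ddph j k p).
  { intros k j; apply Cx_eq.
    - apply (schwarz3 Om (fun q => Re (phi q)) (fun k q => Re (dph k q)) (fun k j q => Re (ddph k j q)) p j k HO Hp).
      + intros k' q' Hq'; exact (proj1 (Hdph k' q' Hq')).
      + intros k' j' q' Hq'; exact (proj1 (Hddph k' j' q' Hq')).
      + intros k' j' q' Hq'; exact (proj1 (contC_cC _ _ _ (Hddphc k' j') Hq')).
    - apply (schwarz3 Om (fun q => Im (phi q)) (fun k q => Im (dph k q)) (fun k j q => Im (ddph k j q)) p j k HO Hp).
      + intros k' q' Hq'; exact (proj2 (Hdph k' q' Hq')).
      + intros k' j' q' Hq'; exact (proj2 (Hddph k' j' q' Hq')).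
      + intros k' j' q' Hq'; exact (proj2 (contC_cC _ _ _ (Hddphc k' j') Hq')). }
  exists (fun k => mkH (dQf (phi p) C0 C0 (Phi p) (dph k p) C0 C0 (psi k p))
     (dQf (phi p) (dph d1 p) (comp d1 (w p)) (Phi p) (dph k p) (ddph d1 k p) (dwc d1 k p) (psi k p))
     (dQf (phi p) (dph d2 p) (comp d2 (w p)) (Phi p) (dph k p) (ddph d2 k p) (dwc d2 k p) (psi k p))
     (dQf (phi p) (dph d3 p) (comp d3 (w p)) (Phi p) (dph k p) (ddph d3 k p) (dwc d3 k p) (psi k p))).
  split.
  - intros k. unfold has_pdH. cbn [h0 h1 h2 h3].
    split; [|split; [|split]].
    + apply (pdC_loc (fun q' => Qf (phi q') ((fun _ => C0) q') (h0 (w q')) (Phi q'))).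
      { exists 1; split; [lra|]; intros; rewrite HQ; reflexivity. }
      eapply pdC_eq; [apply pd_Qf; [apply Hdph; auto|apply pdC_const|apply Hdw0; auto|apply HPhid; auto|auto|auto]|].
      cbv beta; rewrite Hw0, Hdw00; auto.
    + apply (pdC_loc (fun q' => Qf (phi q') (dphi d1 q') (h1 (w q')) (Phi q'))).
      { exists 1; split; [lra|]; intros; rewrite HQ; reflexivity. }
      eapply pdC_eq; [apply pd_Qf; [apply Hdph; auto|apply Hdphi2|apply Hdw1; auto|apply HPhid; auto|auto|auto]|].
      cbv beta; rewrite Udphi; auto.
    + apply (pdC_loc (fun q' => Qf (phi q') (dphi d2 q') (h2 (w q')) (Phi q'))).
      { exists 1; split; [lra|]; intros; rewrite HQ; reflexivity. }
      eapply pdC_eq; [apply pd_Qf; [apply Hdph; auto|apply Hdphi2|apply Hdw2; auto|apply HPhid; auto|auto|auto]|].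
      cbv beta; rewrite Udphi; auto.
    + apply (pdC_loc (fun q' => Qf (phi q') (dphi d3 q') (h3 (w q')) (Phi q'))).
      { exists 1; split; [lra|]; intros; rewrite HQ; reflexivity. }
      eapply pdC_eq; [apply pd_Qf; [apply Hdph; auto|apply Hdphi2|apply Hdw3; auto|apply HPhid; auto|auto|auto]|].
      cbv beta; rewrite Udphi; auto.
  - rewrite HQ. cbn [h1 h2 h3].
    rewrite !Udphi by auto.
    destruct (Hrel p Hp) as [Hd [C32 [C13 C21]]].
    exact (ric_alg (phi p) (Phi p) (q p) (fun k => dph k p) (fun k => comp k (w p))
      (fun k j => ddph k j p) (fun k j => dwc k j p) (Hnz p Hp) HP0 (HSch p Hp)
      (HG d3 d2) (HG d1 d3) (HG d2 d1) Hd C32 C13 C21).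
Qed.
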